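(* Let $A\in M_2(\mathbb{Z})$ be an expanding matrix whose characteristic polynomial is $x^2+3$ or $x^2-3$, let $k\in\mathbb{Z}\setminus\{0\}$, and let $v\in\mathbb{R}^2$ be such that $\{v,Av\}$ is linearly independent. Let $\mathcal{D}=\{0,v,kAv\}$. Then $T(A,\mathcal{D})$ is connected if and only if $k=\pm1$.
   Context: A real square matrix is expanding if all its eigenvalues have modulus strictly larger than $1$. For an expanding matrix $A\in M_n(\mathbb{Z})$ and a finite set $\mathcal{D}\subset\mathbb{R}^n$ with $|\mathcal D|=|\det A|$, the self-affine set $T(A,\mathcal{D})$ is the unique nonempty compact set $T$ with $AT=T+\mathcal{D}$; equivalently $T=\{\sum_{i=1}^\infty A^{-i}d_{j_i}: d_{j_i}\in\mathcal{D}\}$. *)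

(* Defs.v *)
From Stdlib Require Import Reals ZArith.
Open Scope R_scope.

Record mat2 := Mat2 { m11 : Z; m12 : Z; m21 : Z; m22 : Z }.

Definition vec := (R * R)%type.
Definition vadd (p q : vec) : vec := (fst p + fst q, snd p + snd q).
Definition vscale (c : R) (p : vec) : vec := (c * fst p, c * snd p).
Definition vzero : vec := (0, 0).

Definition mapply (A : mat2) (p : vec) : vec :=
  (IZR (m11 A) * fst p + IZR (m12 A) * snd p,
   IZR (m21 A) * fst p + IZR (m22 A) * snd p).

Definition mdet (A : mat2) : Z := (m11 A * m22 A - m12 A * m21 A)%Z.
Definition mtr (A : mat2) : Z := (m11 A + m22 A)%Z.

(* action of the real inverse matrix A^{-1} = adj(A)/det(A) *)
Definition minv_apply (A : mat2) (p : vec) : vec :=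
  ((IZR (m22 A) * fst p - IZR (m12 A) * snd p) / IZR (mdet A),
   (- IZR (m21 A) * fst p + IZR (m11 A) * snd p) / IZR (mdet A)).

Definition minv_pow (A : mat2) (i : nat) (p : vec) : vec :=
  Nat.iter i (minv_apply A) p.

(* characteristic polynomial det(xI - A) = x^2 - tr(A) x + det(A), as a real function *)
Definition charpoly (A : mat2) (x : R) : R :=
  x ^ 2 - IZR (mtr A) * x + IZR (mdet A).

(* complex number re + i im is a root of the characteristic polynomial
   (real and imaginary parts of z^2 - tr z + det written out) *)
Definition is_eigenvalue (A : mat2) (re im : R) : Prop :=
  re ^ 2 - im ^ 2 - IZR (mtr A) * re + IZR (mdet A) = 0 /\
  2 * re * im - IZR (mtr A) * im = 0.

Definition expanding (A : mat2) : Prop :=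
  forall re im : R, is_eigenvalue A re im -> sqrt (re ^ 2 + im ^ 2) > 1.

Definition lin_indep2 (u w : vec) : Prop :=
  forall a b : R, vadd (vscale a u) (vscale b w) = vzero -> a = 0 /\ b = 0.

Fixpoint psum (A : mat2) (d : nat -> vec) (n : nat) : vec :=
  match n with
  | O => vzero
  | S m => vadd (psum A d m) (minv_pow A (S m) (d (S m)))
  end.

Definition self_affine (A : mat2) (D : vec -> Prop) (x : vec) : Prop :=
  exists d : nat -> vec, (forall i, D (d i)) /\
    Un_cv (fun n => fst (psum A d n)) (fst x) /\
    Un_cv (fun n => snd (psum A d n)) (snd x).

Definition dist2 (p q : vec) : R :=
  sqrt ((fst p - fst q) ^ 2 + (snd p - snd q) ^ 2).

Definition open2 (U : vec -> Prop) : Prop :=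
  forall p, U p -> exists eps, eps > 0 /\ forall q, dist2 p q < eps -> U q.

Definition connected2 (S : vec -> Prop) : Prop :=
  ~ exists U V : vec -> Prop,
      open2 U /\ open2 V /\
      (forall x, S x -> U x \/ V x) /\
      (exists x, S x /\ U x) /\ (exists x, S x /\ V x) /\
      (forall x, S x -> U x -> V x -> False).

Definition digits (A : mat2) (v : vec) (k : Z) (x : vec) : Prop :=
  x = vzero \/ x = v \/ x = vscale (IZR k) (mapply A v).

(* Main.v *)
Require Import Defs.
From Stdlib Require Import Reals ZArith.
From Stdlib Require Import Lra Lia ClassicalEpsilon Classical.
Open Scope R_scope.

Ltac vsolve := repeat match goal with p : vec |- _ => destruct p end;
  unfold vadd, vscale, vzero in *; simpl in *; f_equal; try field; try ring.

Lemma vadd_assoc a b c : vadd (vadd a b) c = vadd a (vadd b c).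
Proof. destruct a, b, c; unfold vadd; simpl; f_equal; ring. Qed.
Lemma vadd_0_l a : vadd vzero a = a.
Proof. destruct a; unfold vadd, vzero; simpl; f_equal; ring. Qed.
Lemma vadd_0_l' a : vadd (0,0) a = a.
Proof. destruct a; unfold vadd; simpl; f_equal; ring. Qed.

Definition ell (q : R) (p : vec) : vec := (snd p, fst p / q).
Fixpoint elln (q : R) (n : nat) (p : vec) : vec :=
  match n with O => p | S m => ell q (elln q m p) end.

Lemma ell_add q a b : ell q (vadd a b) = vadd (ell q a) (ell q b).
Proof. destruct a, b; unfold ell, vadd; simpl; f_equal; unfold Rdiv; ring. Qed.
Lemma elln_add q n a b : elln q n (vadd a b) = vadd (elln q n a) (elln q n b).
Proof. induction n; simpl; auto. rewrite IHn, ell_add; auto. Qed.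
Lemma elln_S q n p : elln q (S n) p = elln q n (ell q p).
Proof. induction n; simpl; auto. simpl in IHn. rewrite IHn; auto. Qed.
Lemma elln_zero q n : elln q n (0,0) = (0,0).
Proof. induction n; simpl; auto. rewrite IHn; unfold ell; simpl; f_equal; unfold Rdiv; ring. Qed.
Lemma elln_scale q n c p : elln q n (vscale c p) = vscale c (elln q n p).
Proof. induction n; simpl; auto. rewrite IHn. destruct (elln q n p); unfold ell, vscale; simpl; f_equal; unfold Rdiv; ring. Qed.

Definition Nv (p : vec) : R := Rabs (fst p) + Rabs (snd p).

Lemma Nv_add a b : Nv (vadd a b) <= Nv a + Nv b.
Proof. destruct a, b; unfold Nv, vadd; simpl.
  pose proof (Rabs_triang r r1); pose proof (Rabs_triang r0 r2); lra. Qed.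
Lemma Nv_ge0 a : 0 <= Nv a.
Proof. unfold Nv; pose proof (Rabs_pos (fst a)); pose proof (Rabs_pos (snd a)); lra. Qed.

Lemma Nv_ell q p : Rabs q = 3 -> Nv (ell q p) <= Nv p.
Proof. intros Hq. destruct p as [a b]; unfold Nv, ell; simpl.
  assert (q <> 0) by (intro; subst; rewrite Rabs_R0 in Hq; lra).
  unfold Rdiv; rewrite Rabs_mult, Rabs_inv, Hq.
  pose proof (Rabs_pos a). lra. Qed.

Lemma ell_ell q p : q <> 0 -> ell q (ell q p) = vscale (/ q) p.
Proof. intros; destruct p; unfold ell, vscale; simpl; f_equal; field; auto. Qed.

Lemma Nv_scale c p : Nv (vscale c p) = Rabs c * Nv p.
Proof. destruct p; unfold Nv, vscale; simpl; rewrite !Rabs_mult; ring. Qed.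

Lemma Nv_elln q p n : Rabs q = 3 -> Nv (elln q n p) <= Nv p * (3/2) * (2/3)^n.
Proof. intros Hq.
  assert (q <> 0) by (intro; subst; rewrite Rabs_R0 in Hq; lra).
  assert (HH: forall n, Nv (elln q n p) <= Nv p * (3/2) * (2/3)^n /\
                       Nv (elln q (S n) p) <= Nv p * (3/2) * (2/3)^(S n)).
  { induction n0.
    - simpl. pose proof (Nv_ge0 p). pose proof (Nv_ell q p Hq). split; lra.
    - destruct IHn0 as [H1 H2]. split; auto.
      replace (elln q (S (S n0)) p) with (elln q n0 (ell q (ell q p))).
      2:{ rewrite <- !elln_S. reflexivity. }
      rewrite ell_ell, elln_scale, Nv_scale by auto.
      rewrite Rabs_inv, Hq. simpl. simpl in H2.
      pose proof (Nv_ge0 p). pose proof (pow_le (2/3) n0).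
      replace (Nv p * (3 / 2) * (2 / 3 * (2 / 3 * (2 / 3) ^ n0))) with (4/9 * (Nv p * (3/2) * (2/3)^n0)) by field.
      assert (0 <= Nv p * (3/2) * (2/3)^n0) by (apply Rmult_le_pos; lra).
      pose proof (Nv_ge0 (elln q n0 p)). lra. }
  apply HH.
Qed.

Fixpoint cpsum (q : R) (c : nat -> vec) (n : nat) : vec :=
  match n with O => (0,0) | S m => vadd (cpsum q c m) (elln q (S m) (c (S m))) end.

Definition Dc (k : R) (p : vec) : Prop := p = (0,0) \/ p = (1,0) \/ p = (0,k).

Definition Tc (q k : R) (t : vec) : Prop :=
  exists c : nat -> vec, (forall i, Dc k (c i)) /\
    Un_cv (fun n => fst (cpsum q c n)) (fst t) /\
    Un_cv (fun n => snd (cpsum q c n)) (snd t).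

Lemma cv_const c : Un_cv (fun _ => c) c.
Proof. intros e He; exists O; intros; unfold R_dist; rewrite Rminus_diag, Rabs_R0; lra. Qed.

Lemma cv_ext u w l : (forall n, u n = w n) -> Un_cv u l -> Un_cv w l.
Proof. intros H Hu e He; destruct (Hu e He) as [N HN]; exists N; intros; rewrite <- H; auto. Qed.

Lemma cv_shift u l : Un_cv u l -> Un_cv (fun n => u (S n)) l.
Proof. intros Hu e He; destruct (Hu e He) as [N HN]; exists N; intros; apply HN; lia. Qed.

Lemma cv_unshift u l : Un_cv (fun n => u (S n)) l -> Un_cv u l.
Proof. intros Hu e He; destruct (Hu e He) as [N HN]; exists (S N); intros n Hn.
  destruct n as [|n]; [lia|]. apply HN; lia. Qed.

Lemma cv_lin a b u w l1 l2 : Un_cv u l1 -> Un_cv w l2 ->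
  Un_cv (fun n => a * u n + b * w n) (a * l1 + b * l2).
Proof. intros. apply CV_plus; apply CV_mult; auto; apply cv_const. Qed.

Lemma cv_bound u l C : (forall n, Rabs (u n - l) <= C * (2/3)^n) -> Un_cv u l.
Proof. intros H e He.
  destruct (pow_lt_1_zero (2/3)) with (y := e / (Rabs C + 1)) as [N HN].
  { rewrite Rabs_pos_eq; lra. }
  { apply Rdiv_lt_0_compat; [lra|]. pose proof (Rabs_pos C); lra. }
  exists N; intros n Hn. unfold R_dist. specialize (HN n Hn). specialize (H n).
  rewrite Rabs_pos_eq in HN by (apply pow_le; lra).
  assert (0 <= (2/3)^n) by (apply pow_le; lra).
  assert (C * (2/3)^n <= Rabs C * (2/3)^n) by (apply Rmult_le_compat_r; auto; apply Rle_abs).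
  assert ((Rabs C + 1) * (2/3)^n < e).
  { apply Rmult_lt_reg_r with (/ (Rabs C + 1)).
    - apply Rinv_0_lt_compat; pose proof (Rabs_pos C); lra.
    - replace ((Rabs C + 1) * (2/3)^n * / (Rabs C + 1)) with ((2/3)^n).
      2:{ field. pose proof (Rabs_pos C); lra. } exact HN. }
  nra.
Qed.

Lemma cv_abs_le u l B : Un_cv u l -> (forall n, Rabs (u n) <= B) -> Rabs l <= B.
Proof. intros Hu HB. destruct (Rle_dec (Rabs l) B) as [|Hn]; auto. exfalso.
  destruct (Hu (Rabs l - B)) as [N HN]; [lra|].
  specialize (HN N (le_n _)). specialize (HB N). unfold R_dist in HN.
  pose proof (Rabs_triang_inv l (u N)). rewrite <- Rabs_Ropp in HN.
  replace (- (u N - l)) with (l - u N) in HN by ring. lra.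
Qed.

Lemma cv_unique u l1 l2 : Un_cv u l1 -> Un_cv u l2 -> l1 = l2.
Proof. intros; eapply UL_sequence; eauto. Qed.

Lemma cpsum_ext q c1 c2 n : (forall i, (1 <= i)%nat -> c1 i = c2 i) -> cpsum q c1 n = cpsum q c2 n.
Proof. intros H; induction n; simpl; auto. rewrite IHn, H; auto; lia. Qed.

Lemma cpsum_shift q c n :
  cpsum q c (S n) = ell q (vadd (c 1%nat) (cpsum q (fun i => c (S i)) n)).
Proof. induction n.
  - simpl. rewrite vadd_0_l'. destruct (c 1%nat); unfold ell, vadd; simpl; f_equal; unfold Rdiv; ring.
  - change (cpsum q c (S (S n))) with (vadd (cpsum q c (S n)) (ell q (elln q (S n) (c (S (S n)))))).
    rewrite IHn. simpl cpsum. rewrite <- vadd_assoc, ell_add, ell_add, ell_add.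
    reflexivity.
Qed.

Lemma Tc_decomp q k t : q <> 0 -> Tc q k t ->
  exists d s, Dc k d /\ Tc q k s /\ t = ell q (vadd d s).
Proof. intros Hq [c [Hc [H1 H2]]].
  exists (c 1%nat), (q * snd t - fst (c 1%nat), fst t - snd (c 1%nat)). split; auto. split.
  - exists (fun i => c (S i)). split; auto. simpl. split.
    + apply cv_ext with (fun n => q * snd (cpsum q c (S n)) + (-1) * fst (c 1%nat)).
      { intros n. rewrite cpsum_shift. destruct (c 1%nat), (cpsum q (fun i => c (S i)) n).
        unfold ell, vadd; simpl. field; auto. }
      replace (q * snd t - fst (c 1%nat)) with (q * snd t + (-1) * fst (c 1%nat)) by ring.
      apply cv_lin; [apply (cv_shift (fun n => snd (cpsum q c n))); auto | apply cv_const].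
    + apply cv_ext with (fun n => 1 * fst (cpsum q c (S n)) + (-1) * snd (c 1%nat)).
      { intros n. rewrite cpsum_shift. destruct (c 1%nat), (cpsum q (fun i => c (S i)) n).
        unfold ell, vadd; simpl. ring. }
      replace (fst t - snd (c 1%nat)) with (1 * fst t + (-1) * snd (c 1%nat)) by ring.
      apply cv_lin; [apply (cv_shift (fun n => fst (cpsum q c n))); auto | apply cv_const].
  - destruct t, (c 1%nat); unfold ell, vadd; simpl; f_equal; [ring | field; auto].
Qed.

Lemma Tc_image q k d s : Dc k d -> Tc q k s -> Tc q k (ell q (vadd d s)).
Proof. intros Hd [c [Hc [H1 H2]]].
  set (c' := fun n => match n with O | S O => d | S m => c m end).
  exists c'. split.
  { intros [|[|i]]; simpl; auto. }
  assert (E: forall n, cpsum q c' (S n) = ell q (vadd d (cpsum q c n))).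
  { intros n. rewrite cpsum_shift. f_equal. f_equal. apply cpsum_ext.
    intros [|i] Hi; [lia|]. reflexivity. }
  split; apply (cv_unshift (fun n => _ (cpsum q c' n))).
  - apply cv_ext with (fun n => 1 * snd (cpsum q c n) + 1 * snd d).
    { intros n; rewrite E; destruct d, (cpsum q c n); unfold ell, vadd; simpl; ring. }
    replace (fst (ell q (vadd d s))) with (1 * snd s + 1 * snd d)
      by (destruct d, s; unfold ell, vadd; simpl; ring).
    apply cv_lin; auto; apply cv_const.
  - apply cv_ext with (fun n => (/q) * fst (cpsum q c n) + (/q) * fst d).
    { intros n; rewrite E; destruct d, (cpsum q c n); unfold ell, vadd; simpl; unfold Rdiv; ring. }
    replace (snd (ell q (vadd d s))) with (/q * fst s + /q * fst d)
      by (destruct d, s; unfold ell, vadd; simpl; unfold Rdiv; ring).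
    apply cv_lin; auto; apply cv_const.
Qed.

Lemma orbit_Tc q k c o B : Rabs q = 3 -> (forall i, Dc k (c i)) ->
  (forall n, Nv (o n) <= B) ->
  (forall n, o n = ell q (vadd (c (S n)) (o (S n)))) -> Tc q k (o O).
Proof. intros Hq Hc HB Ho.
  assert (E: forall n, vadd (cpsum q c n) (elln q n (o n)) = o O).
  { induction n. { simpl. apply vadd_0_l'. }
    rewrite <- IHn. change (cpsum q c (S n)) with (vadd (cpsum q c n) (elln q (S n) (c (S n)))). rewrite vadd_assoc, <- elln_add, elln_S, <- Ho. reflexivity. }
  exists c. split; auto.
  assert (Hb: forall n, Nv (elln q n (o n)) <= (B * (3/2)) * (2/3)^n).
  { intros n. eapply Rle_trans; [apply Nv_elln; auto|].
    pose proof (pow_le (2/3) n). specialize (HB n).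
    replace (B * (3/2) * (2/3)^n) with (B * ((3/2) * (2/3)^n)) by field.
    replace (Nv (o n) * (3/2) * (2/3)^n) with (Nv (o n) * ((3/2) * (2/3)^n)) by field.
    apply Rmult_le_compat_r; lra. }
  split; apply cv_bound with (B * (3/2)); intros n; specialize (Hb n); rewrite <- (E n);
    destruct (cpsum q c n), (elln q n (o n)) eqn:?; unfold Nv, vadd in *; simpl in *.
  - replace (r - (r + r1)) with (- r1) by ring. rewrite Rabs_Ropp. pose proof (Rabs_pos r2). lra.
  - replace (r0 - (r0 + r2)) with (- r2) by ring. rewrite Rabs_Ropp. pose proof (Rabs_pos r1). lra.
Qed.

Lemma Dc_Nv k p : Dc k p -> Nv p <= 1 + Rabs k.
Proof. intros [H|[H|H]]; subst p; unfold Nv; simpl; rewrite ?Rabs_R0, ?Rabs_R1; pose proof (Rabs_pos k); lra. Qed.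

Lemma cpsum_tail q k c n m : Rabs q = 3 -> (forall i, Dc k (c i)) ->
  Nv (vadd (cpsum q c (m + n)) (vscale (-1) (cpsum q c n))) <=
  3 * (1 + Rabs k) * (2/3)^n - 3 * (1 + Rabs k) * (2/3)^(m+n).
Proof. intros Hq Hc. set (K := 1 + Rabs k).
  induction m.
  - simpl. replace (vadd (cpsum q c n) (vscale (-1) (cpsum q c n))) with ((0,0):vec)
      by (destruct (cpsum q c n); unfold vadd, vscale; simpl; f_equal; ring).
    unfold Nv; simpl; rewrite Rabs_R0; lra.
  - replace (S m + n)%nat with (S (m + n)) by lia.
    change (cpsum q c (S (m+n))) with (vadd (cpsum q c (m+n)) (elln q (S (m+n)) (c (S (m+n))))).
    replace (vadd (vadd (cpsum q c (m + n)) (elln q (S (m + n)) (c (S (m + n))))) (vscale (-1) (cpsum q c n)))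
      with (vadd (vadd (cpsum q c (m + n)) (vscale (-1) (cpsum q c n))) (elln q (S (m + n)) (c (S (m + n)))))
      by (destruct (cpsum q c (m+n)), (cpsum q c n), (elln q (S (m + n)) (c (S (m + n)))); unfold vadd, vscale; simpl; f_equal; ring).
    eapply Rle_trans; [apply Nv_add|].
    pose proof (Nv_elln q (c (S (m + n))) (S (m+n)) Hq).
    pose proof (Dc_Nv k _ (Hc (S (m+n)))). fold K in H0.
    assert (Nv (c (S (m + n))) * (3 / 2) * (2 / 3) ^ S (m + n) <= K * (3/2) * (2/3) ^ S (m+n)).
    { apply Rmult_le_compat_r; [apply pow_le; lra|]. apply Rmult_le_compat_r; lra. }
    simpl pow in *. set (X := (2/3)^(m+n)) in *.
    replace (K * (3 / 2) * (2 / 3 * X)) with (K * X) in H1 by field.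
    replace (3 * K * (2 / 3 * X)) with (2 * (K * X)) by field. lra.
Qed.

Lemma cpsum_bound q k c n : Rabs q = 3 -> (forall i, Dc k (c i)) ->
  Nv (cpsum q c n) <= 3 * (1 + Rabs k).
Proof. intros Hq Hc. pose proof (cpsum_tail q k c O n Hq Hc).
  replace (n + 0)%nat with n in H by lia. simpl in H.
  replace (vadd (cpsum q c n) (vscale (-1) (0, 0))) with (cpsum q c n) in H
    by (destruct (cpsum q c n); unfold vadd, vscale; simpl; f_equal; ring).
  pose proof (pow_le (2/3) n). pose proof (Rabs_pos k). nra.
Qed.

Lemma Tc_bound q k t : Rabs q = 3 -> Tc q k t ->
  Rabs (fst t) <= 3 * (1 + Rabs k) /\ Rabs (snd t) <= 3 * (1 + Rabs k).
Proof. intros Hq [c [Hc [H1 H2]]]. split.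
  - apply cv_abs_le with (1 := H1). intros n. pose proof (cpsum_bound q k c n Hq Hc).
    unfold Nv in H. pose proof (Rabs_pos (snd (cpsum q c n))). lra.
  - apply cv_abs_le with (1 := H2). intros n. pose proof (cpsum_bound q k c n Hq Hc).
    unfold Nv in H. pose proof (Rabs_pos (fst (cpsum q c n))). lra.
Qed.

Lemma cpsum_cauchy q k c : Rabs q = 3 -> (forall i, Dc k (c i)) ->
  forall n m, (n <= m)%nat -> Nv (vadd (cpsum q c m) (vscale (-1) (cpsum q c n))) <= 3 * (1 + Rabs k) * (2/3)^n.
Proof. intros Hq Hc n m Hnm. replace m with ((m - n) + n)%nat by lia.
  eapply Rle_trans; [apply cpsum_tail; auto|].
  assert (0 <= 3 * (1 + Rabs k) * (2/3)^(m-n+n)).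
  { pose proof (Rabs_pos k). apply Rmult_le_pos; [lra|apply pow_le; lra]. }
  lra.
Qed.

Lemma cv_exists q k c : Rabs q = 3 -> (forall i, Dc k (c i)) ->
  exists z : vec, Un_cv (fun n => fst (cpsum q c n)) (fst z) /\ Un_cv (fun n => snd (cpsum q c n)) (snd z).
Proof. intros Hq Hc. set (K := 3 * (1 + Rabs k)).
  assert (HK: 0 <= K) by (unfold K; pose proof (Rabs_pos k); lra).
  assert (Hsmall: forall e, e > 0 -> exists N, forall n m, (N <= n)%nat -> (N <= m)%nat ->
     Nv (vadd (cpsum q c m) (vscale (-1) (cpsum q c n))) < e).
  { intros e He. destruct (pow_lt_1_zero (2/3)) with (y := e / (2 * K + 1)) as [N HN].
    { rewrite Rabs_pos_eq; lra. } { apply Rdiv_lt_0_compat; lra. }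
    exists N; intros n m Hn Hm. specialize (HN N (le_n _)).
    rewrite Rabs_pos_eq in HN by (apply pow_le; lra).
    pose proof (cpsum_cauchy q k c Hq Hc N n Hn). pose proof (cpsum_cauchy q k c Hq Hc N m Hm).
    fold K in H, H0.
    eapply Rle_lt_trans.
    { replace (vadd (cpsum q c m) (vscale (-1) (cpsum q c n))) with
        (vadd (vadd (cpsum q c m) (vscale (-1) (cpsum q c N))) (vscale (-1) (vadd (cpsum q c n) (vscale (-1) (cpsum q c N)))))
        by (destruct (cpsum q c m), (cpsum q c n), (cpsum q c N); unfold vadd, vscale; simpl; f_equal; ring).
      eapply Rle_trans; [apply Nv_add|]. rewrite Nv_scale. replace (Rabs (-1)) with 1 by (rewrite Rabs_left; lra). apply Rle_refl. }
    assert ((2 * K + 1) * (2/3)^N < e).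
    { apply Rmult_lt_reg_r with (/ (2 * K + 1)). { apply Rinv_0_lt_compat; lra. }
      replace ((2 * K + 1) * (2/3)^N * / (2 * K + 1)) with ((2/3)^N) by (field; lra). exact HN. }
    assert (0 <= (2/3)^N) by (apply pow_le; lra). nra. }
  destruct (R_complete (fun n => fst (cpsum q c n))) as [l1 Hl1].
  { intros e He. destruct (Hsmall e He) as [N HN]. exists N. intros n m Hn Hm.
    specialize (HN m n Hm Hn). unfold R_dist. unfold Nv, vadd, vscale in HN; simpl in HN.
    pose proof (Rabs_pos (snd (cpsum q c n) + -1 * snd (cpsum q c m))).
    replace (fst (cpsum q c n) - fst (cpsum q c m)) with (fst (cpsum q c n) + -1 * fst (cpsum q c m)) by ring.
    lra. }
  destruct (R_complete (fun n => snd (cpsum q c n))) as [l2 Hl2].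
  { intros e He. destruct (Hsmall e He) as [N HN]. exists N. intros n m Hn Hm.
    specialize (HN m n Hm Hn). unfold R_dist. unfold Nv, vadd, vscale in HN; simpl in HN.
    pose proof (Rabs_pos (fst (cpsum q c n) + -1 * fst (cpsum q c m))).
    replace (snd (cpsum q c n) - snd (cpsum q c m)) with (snd (cpsum q c n) + -1 * snd (cpsum q c m)) by ring.
    lra. }
  exists (l1, l2). simpl; auto.
Qed.

Lemma Tc_zero q k : Rabs q = 3 -> Tc q k (0,0).
Proof. intros Hq. apply (orbit_Tc q k (fun _ => (0,0)) (fun _ => (0,0)) 0); auto.
  - intros; left; auto.
  - intros; unfold Nv; simpl; rewrite Rabs_R0; lra.
  - intros; unfold ell, vadd; simpl; f_equal; unfold Rdiv; ring.
Qed.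

Lemma G_id q n a d s :
  vadd (vadd a (elln q (S n) d)) (elln q (S n) s) = vadd a (elln q n (ell q (vadd d s))).
Proof. rewrite vadd_assoc, <- elln_add, elln_S. reflexivity. Qed.

Fixpoint seqa (q : R) (sel : vec * nat -> vec) (n : nat) : vec :=
  match n with O => (0,0) | S m => vadd (seqa q sel m) (elln q (S m) (sel (seqa q sel m, m))) end.

Lemma close_lemma q k Phi C (Hq : Rabs q = 3) (HC : 0 <= C)
  (HPhi : forall a b, dist2 (Phi a) (Phi b) <= C * Nv (vadd a (vscale (-1) b)))
  (a : nat -> vec) (z : vec) :
  Un_cv (fun n => fst (a n)) (fst z) -> Un_cv (fun n => snd (a n)) (snd z) ->
  forall eps, eps > 0 -> exists n, forall t, Tc q k t -> dist2 (Phi z) (Phi (vadd (a n) (elln q n t))) < eps.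
Proof. intros H1 H2 eps He.
  set (d := eps / (3 * (C + 1))).
  assert (Hd: d > 0) by (unfold d; apply Rdiv_lt_0_compat; lra).
  set (M := 6 * (1 + Rabs k)).
  assert (HM: 0 <= M) by (unfold M; pose proof (Rabs_pos k); lra).
  destruct (H1 d Hd) as [N1 HN1]. destruct (H2 d Hd) as [N2 HN2].
  destruct (pow_lt_1_zero (2/3)) with (y := d / (M * (3/2) + 1)) as [N3 HN3].
  { rewrite Rabs_pos_eq; lra. } { apply Rdiv_lt_0_compat; lra. }
  set (n := (N1 + N2 + N3)%nat). exists n. intros t Ht.
  specialize (HN1 n ltac:(unfold n; lia)). specialize (HN2 n ltac:(unfold n; lia)).
  specialize (HN3 n ltac:(unfold n; lia)). unfold R_dist in *.
  rewrite Rabs_pos_eq in HN3 by (apply pow_le; lra).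
  assert (Hb: Nv (elln q n t) < d).
  { eapply Rle_lt_trans; [apply Nv_elln; auto|].
    destruct (Tc_bound q k t Hq Ht). assert (Nv t <= M) by (unfold Nv, M; lra).
    assert ((M * (3/2) + 1) * (2/3)^n < d).
    { apply Rmult_lt_reg_r with (/ (M * (3/2) + 1)). { apply Rinv_0_lt_compat; lra. }
      replace ((M * (3/2) + 1) * (2/3)^n * / (M * (3/2) + 1)) with ((2/3)^n) by (field; lra). exact HN3. }
    assert (0 <= (2/3)^n) by (apply pow_le; lra). pose proof (Nv_ge0 t).
    assert (Nv t * (3/2) * (2/3)^n <= M * (3/2) * (2/3)^n).
    { apply Rmult_le_compat_r; auto. apply Rmult_le_compat_r; lra. }
    nra. }
  eapply Rle_lt_trans; [apply HPhi|].
  assert (Nv (vadd z (vscale (-1) (vadd (a n) (elln q n t)))) < 3 * d).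
  { destruct z as [z1 z2]. destruct (a n) as [a1 a2]. destruct (elln q n t) as [b1 b2].
    unfold Nv, vadd, vscale in *; simpl in *.
    replace (z1 + -1 * (a1 + b1)) with (- (a1 - z1) + - b1) by ring.
    replace (z2 + -1 * (a2 + b2)) with (- (a2 - z2) + - b2) by ring.
    pose proof (Rabs_triang (- (a1 - z1)) (- b1)). pose proof (Rabs_triang (- (a2 - z2)) (- b2)).
    rewrite !Rabs_Ropp in *. lra. }
  assert (C * (3 * d) < eps).
  { unfold d. replace (C * (3 * (eps / (3 * (C + 1))))) with (eps * (C / (C + 1))) by (field; lra).
    assert (C / (C + 1) < 1). { apply Rmult_lt_reg_r with (C + 1); [lra|]. field_simplify; lra. }
    nra. }
  pose proof (Nv_ge0 (vadd z (vscale (-1) (vadd (a n) (elln q n t))))).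
  nra.
Qed.

Lemma conn_main q k Phi C (Hq : Rabs q = 3) (HC : 0 <= C)
  (HPhi : forall a b, dist2 (Phi a) (Phi b) <= C * Nv (vadd a (vscale (-1) b)))
  (Hedge : forall d, Dc k d -> exists s s', Tc q k s /\ Tc q k s' /\ vadd d s = s') :
  connected2 (fun x => exists t, Tc q k t /\ x = Phi t).
Proof.
  assert (Hq0 : q <> 0) by (intro; subst; rewrite Rabs_R0 in Hq; lra).
  intros [U [V [HU [HV [Hcov [[xu [[tu [Htu ->]] Uxu]] [[xv [[tv [Htv ->]] Vxv]] Hdis]]]]]]].
  assert (Hcov' : forall t, Tc q k t -> U (Phi t) \/ V (Phi t)) by (intros; apply Hcov; eauto).
  assert (Hdis' : forall t, Tc q k t -> U (Phi t) -> V (Phi t) -> False) by (intros; eapply Hdis; eauto).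
  set (Inv := fun a n => forall t, Tc q k t -> Tc q k (vadd a (elln q n t))).
  set (mixed := fun a n => exists t t', Tc q k t /\ Tc q k t' /\
      U (Phi (vadd a (elln q n t))) /\ V (Phi (vadd a (elln q n t')))).
  assert (Inv_step : forall a n d, Inv a n -> Dc k d -> Inv (vadd a (elln q (S n) d)) (S n)).
  { intros a n d HI Hd t Ht. rewrite G_id. apply HI. apply Tc_image; auto. }
  assert (step : forall a n, Inv a n -> mixed a n ->
            exists d, Dc k d /\ mixed (vadd a (elln q (S n) d)) (S n)).
  { intros a n HI [t [t' [Ht [Ht' [Ut Vt']]]]]. apply NNPP; intro Hno.
    set (P := fun d s => vadd a (elln q n (ell q (vadd d s)))).
    assert (HP : forall d s, Dc k d -> Tc q k s -> Tc q k (P d s)).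
    { intros; apply HI; apply Tc_image; auto. }
    assert (AU : forall d s, Dc k d -> Tc q k s -> U (Phi (P d s)) ->
                 forall s', Tc q k s' -> U (Phi (P d s'))).
    { intros d s Hd Hs Us s' Hs'. destruct (Hcov' _ (HP d s' Hd Hs')) as [|Vs]; auto.
      exfalso; apply Hno. exists d; split; auto. exists s, s'. unfold P in *; rewrite !G_id; auto. }
    assert (AV : forall d s, Dc k d -> Tc q k s -> V (Phi (P d s)) ->
                 forall s', Tc q k s' -> V (Phi (P d s'))).
    { intros d s Hd Hs Vs s' Hs'. destruct (Hcov' _ (HP d s' Hd Hs')) as [Us|]; auto.
      exfalso; apply Hno. exists d; split; auto. exists s', s. unfold P in *; rewrite !G_id; auto. }
    assert (H0 : Dc k (0,0)) by (left; auto).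
    destruct (Tc_decomp q k t Hq0 Ht) as [d1 [s1 [Hd1 [Hs1 E1]]]].
    destruct (Tc_decomp q k t' Hq0 Ht') as [d2 [s2 [Hd2 [Hs2 E2]]]].
    assert (U0 : forall s', Tc q k s' -> U (Phi (P (0,0) s'))).
    { destruct (Hedge d1 Hd1) as [e [e' [He [He' Ee]]]].
      apply (AU (0,0) e' H0 He'). unfold P. rewrite vadd_0_l', <- Ee.
      apply (AU d1 s1 Hd1 Hs1); auto. unfold P; rewrite <- E1; auto. }
    assert (V0 : forall s', Tc q k s' -> V (Phi (P (0,0) s'))).
    { destruct (Hedge d2 Hd2) as [e [e' [He [He' Ee]]]].
      apply (AV (0,0) e' H0 He'). unfold P. rewrite vadd_0_l', <- Ee.
      apply (AV d2 s2 Hd2 Hs2); auto. unfold P; rewrite <- E2; auto. }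
    pose proof (Tc_zero q k Hq) as Hz.
    apply (Hdis' _ (HP _ _ H0 Hz) (U0 _ Hz) (V0 _ Hz)). }
  assert (Hsel : forall p : vec * nat, {d | Dc k d /\ (Inv (fst p) (snd p) -> mixed (fst p) (snd p) ->
                     mixed (vadd (fst p) (elln q (S (snd p)) d)) (S (snd p)))}).
  { intros [a n]. apply constructive_indefinite_description. simpl.
    destruct (classic (Inv a n /\ mixed a n)) as [[HI HM]|Hn].
    - destruct (step a n HI HM) as [d [Hd Hm]]. exists d; auto.
    - exists (0,0). split; [left; auto|]. intros; exfalso; auto. }
  set (sel := fun p => proj1_sig (Hsel p)).
  assert (Hsel1 : forall p, Dc k (sel p)) by (intros p; exact (proj1 (proj2_sig (Hsel p)))).
  assert (Hsel2 : forall a n, Inv a n -> mixed a n -> mixed (vadd a (elln q (S n) (sel (a, n)))) (S n)).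
  { intros a n; exact (proj2 (proj2_sig (Hsel (a, n)))). }
  set (u := fun n => match n with O => (0,0) | S m => sel (seqa q sel m, m) end).
  assert (Hu : forall i, Dc k (u i)) by (intros [|i]; simpl; auto; left; auto).
  assert (Hcs : forall n, cpsum q u n = seqa q sel n).
  { induction n; simpl; auto. rewrite IHn; auto. }
  assert (Hinv : forall n, Inv (seqa q sel n) n /\ mixed (seqa q sel n) n).
  { induction n.
    - split.
      + intros t Ht; simpl; rewrite vadd_0_l'; auto.
      + exists tu, tv; simpl; rewrite !vadd_0_l'; auto.
    - destruct IHn as [HI HM]. simpl seqa. split.
      + apply Inv_step; auto.
      + apply Hsel2; auto. }
  destruct (cv_exists q k u Hq Hu) as [z [Hz1 Hz2]].
  assert (Hzt : Tc q k z) by (exists u; auto).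
  assert (Hz1' : Un_cv (fun n => fst (seqa q sel n)) (fst z)) by (apply cv_ext with (2 := Hz1); intros; rewrite Hcs; auto).
  assert (Hz2' : Un_cv (fun n => snd (seqa q sel n)) (snd z)) by (apply cv_ext with (2 := Hz2); intros; rewrite Hcs; auto).
  destruct (Hcov' z Hzt) as [Uz|Vz].
  - destruct (HU _ Uz) as [eps [He Heps]].
    destruct (close_lemma q k Phi C Hq HC HPhi _ z Hz1' Hz2' eps He) as [n Hn].
    destruct (Hinv n) as [HI [t [t' [Ht [Ht' [_ Vt']]]]]].
    apply (Hdis' _ (HI t' Ht')); auto.
  - destruct (HV _ Vz) as [eps [He Heps]].
    destruct (close_lemma q k Phi C Hq HC HPhi _ z Hz1' Hz2' eps He) as [n Hn].
    destruct (Hinv n) as [HI [t [t' [Ht [Ht' [Ut _]]]]]].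
    apply (Hdis' _ (HI t Ht)); auto.
Qed.

Lemma abs_between x B : Rabs x <= B -> -B <= x <= B.
Proof. intros H. pose proof (Rle_abs x). assert (- x <= Rabs x) by (rewrite <- Rabs_Ropp; apply Rle_abs). lra. Qed.

Lemma small_pow M e : 0 <= M -> e > 0 -> exists n, M * (1/3)^n < e.
Proof. intros HM He.
  destruct (pow_lt_1_zero (1/3)) with (y := e / (M + 1)) as [N HN].
  { rewrite Rabs_pos_eq; lra. } { apply Rdiv_lt_0_compat; lra. }
  exists N. specialize (HN N (le_n _)). rewrite Rabs_pos_eq in HN by (apply pow_le; lra).
  assert ((M + 1) * (1/3)^N < e).
  { apply Rmult_lt_reg_r with (/ (M + 1)). { apply Rinv_0_lt_compat; lra. }
    replace ((M + 1) * (1/3)^N * / (M + 1)) with ((1/3)^N) by (field; lra). exact HN. }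
  assert (0 <= (1/3)^N) by (apply pow_le; lra). nra.
Qed.

Lemma ybounds q k x0 x1 y0 y1 (Hq : Rabs q = 3)
  (Hstep : forall e1 e2 d s1 s2, 0 <= e1 -> 0 <= e2 -> Dc k d ->
     x0 - e1 <= s1 <= x1 + e1 -> y0 - e2 <= s2 <= y1 + e2 ->
     (x0 - e2 <= snd d + s2 <= x1 + e2) /\ (y0 - e1/3 <= (fst d + s1)/q <= y1 + e1/3)) :
  forall t, Tc q k t -> y0 <= snd t <= y1.
Proof.
  assert (Hq0 : q <> 0) by (intro; subst; rewrite Rabs_R0 in Hq; lra).
  set (Q := fun e1 e2 => forall t, Tc q k t -> x0 - e1 <= fst t <= x1 + e1 /\ y0 - e2 <= snd t <= y1 + e2).
  assert (Qstep : forall e1 e2, 0 <= e1 -> 0 <= e2 -> Q e1 e2 -> Q e2 (e1/3)).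
  { intros e1 e2 He1 He2 HQ t Ht. destruct (Tc_decomp q k t Hq0 Ht) as [d [s [Hd [Hs ->]]]].
    destruct (HQ s Hs). destruct d as [d1 d2], s as [s1 s2]; simpl in *.
    apply (Hstep e1 e2 (d1, d2) s1 s2); auto. }
  set (M := 3 * (1 + Rabs k) + Rabs x0 + Rabs x1 + Rabs y0 + Rabs y1).
  assert (HM : 0 <= M) by (unfold M; pose proof (Rabs_pos k); pose proof (Rabs_pos x0);
     pose proof (Rabs_pos x1); pose proof (Rabs_pos y0); pose proof (Rabs_pos y1); lra).
  assert (Q0 : Q M M).
  { intros t Ht. destruct (Tc_bound q k t Hq Ht). unfold M.
    pose proof (Rabs_pos k).
    apply abs_between in H; apply abs_between in H0.
    pose proof (Rle_abs x0); pose proof (Rle_abs x1); pose proof (Rle_abs y0); pose proof (Rle_abs y1).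
    pose proof (Rabs_pos x0); pose proof (Rabs_pos x1); pose proof (Rabs_pos y0); pose proof (Rabs_pos y1).
    assert (- x0 <= Rabs x0) by (rewrite <- Rabs_Ropp; apply Rle_abs).
    assert (- x1 <= Rabs x1) by (rewrite <- Rabs_Ropp; apply Rle_abs).
    assert (- y0 <= Rabs y0) by (rewrite <- Rabs_Ropp; apply Rle_abs).
    assert (- y1 <= Rabs y1) by (rewrite <- Rabs_Ropp; apply Rle_abs).
    lra. }
  assert (Qn : forall n, Q (M * (1/3)^n) (M * (1/3)^n)).
  { induction n; simpl.
    - replace (M * 1) with M by ring. auto.
    - assert (0 <= M * (1/3)^n) by (apply Rmult_le_pos; auto; apply pow_le; lra).
      replace (M * (1/3 * (1/3)^n)) with ((M * (1/3)^n) / 3) by field.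
      apply Qstep; try lra. apply Qstep; auto. }
  intros t Ht. split.
  - destruct (Rle_dec y0 (snd t)) as [|Hn]; auto. exfalso.
    destruct (small_pow M (y0 - snd t) HM ltac:(lra)) as [n Hn'].
    destruct (Qn n t Ht). lra.
  - destruct (Rle_dec (snd t) y1) as [|Hn]; auto. exfalso.
    destruct (small_pow M (snd t - y1) HM ltac:(lra)) as [n Hn'].
    destruct (Qn n t Ht). lra.
Qed.

Lemma disc_main q k Phi f Cf (Hq : Rabs q = 3) (HCf : 0 <= Cf)
  (Hf : forall t, f (Phi t) = fst t)
  (Hlip : forall p p', Rabs (f p - f p') <= Cf * dist2 p p')
  y0 y1 (Hy : forall t, Tc q k t -> y0 <= snd t <= y1) (Hk : y1 - y0 < Rabs k) :
  ~ connected2 (fun x => exists t, Tc q k t /\ x = Phi t).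
Proof.
  assert (Hq0 : q <> 0) by (intro; subst; rewrite Rabs_R0 in Hq; lra).
  set (c := (y0 + y1 + k) / 2).
  assert (Hopen : forall (sg : R), sg = 1 \/ sg = -1 -> open2 (fun p => sg * (f p - c) > 0)).
  { intros sg Hsg p Hp. exists (sg * (f p - c) / (Cf + 1)). split.
    { apply Rdiv_lt_0_compat; lra. }
    intros p' Hd. specialize (Hlip p p').
    assert (Cf * dist2 p p' <= (Cf + 1) * dist2 p p').
    { assert (0 <= dist2 p p') by (unfold dist2; apply sqrt_pos). nra. }
    assert ((Cf + 1) * dist2 p p' < sg * (f p - c)).
    { apply Rmult_lt_reg_r with (/ (Cf + 1)). { apply Rinv_0_lt_compat; lra. }
      replace ((Cf + 1) * dist2 p p' * / (Cf + 1)) with (dist2 p p') by (field; lra).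
      exact Hd. }
    apply abs_between in Hlip. destruct Hsg; subst sg; lra. }
  pose proof (Tc_zero q k Hq) as Hz.
  assert (Hkw : Tc q k (k, 0)).
  { replace (k, 0) with (ell q (vadd (0,k) (0,0))).
    - apply Tc_image; auto. right; right; auto.
    - unfold ell, vadd; simpl; f_equal; [ring | unfold Rdiv; ring]. }
  destruct (Hy _ Hz) as [Hz1 Hz2]; simpl in Hz1, Hz2.
  assert (Hcls : forall t, Tc q k t -> fst t < c \/ fst t > c).
  { intros t Ht. destruct (Tc_decomp q k t Hq0 Ht) as [d [s [Hd [Hs ->]]]].
    destruct (Hy s Hs) as [Hs1 Hs2]. unfold c.
    destruct Hd as [Hd|[Hd|Hd]]; subst d; unfold ell, vadd; simpl;
      destruct (Rcase_abs k) as [Hk0|Hk0];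
      [rewrite Rabs_left in Hk by lra | rewrite Rabs_right in Hk by lra |
       rewrite Rabs_left in Hk by lra | rewrite Rabs_right in Hk by lra |
       rewrite Rabs_left in Hk by lra | rewrite Rabs_right in Hk by lra]; lra. }
  destruct (Rcase_abs k) as [Hk0|Hk0].
  - rewrite Rabs_left in Hk by lra.
    intros Hc. apply Hc.
    exists (fun p => 1 * (f p - c) > 0), (fun p => -1 * (f p - c) > 0).
    split; [apply Hopen; auto|]. split; [apply Hopen; auto|].
    split. { intros x [t [Ht ->]]. rewrite Hf. destruct (Hcls t Ht); [right|left]; lra. }
    split. { exists (Phi (0,0)). split; [eauto|]. rewrite Hf. simpl. unfold c. lra. }
    split. { exists (Phi (k,0)). split; [eauto|]. rewrite Hf. simpl. unfold c. lra. }
    intros x _ H1 H2. lra.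
  - rewrite Rabs_right in Hk by lra.
    intros Hc. apply Hc.
    exists (fun p => -1 * (f p - c) > 0), (fun p => 1 * (f p - c) > 0).
    split; [apply Hopen; auto|]. split; [apply Hopen; auto|].
    split. { intros x [t [Ht ->]]. rewrite Hf. destruct (Hcls t Ht); [left|right]; lra. }
    split. { exists (Phi (0,0)). split; [eauto|]. rewrite Hf. simpl. unfold c. lra. }
    split. { exists (Phi (k,0)). split; [eauto|]. rewrite Hf. simpl. unfold c. lra. }
    intros x _ H1 H2. lra.
Qed.

Fixpoint cyc4 {X : Type} (a b c d : X) (n : nat) : X :=
  match n with O => a | S O => b | S (S O) => c | S (S (S O)) => d
  | S (S (S (S m))) => cyc4 a b c d m end.

Lemma cycle4 q k t0 t1 t2 t3 d1 d2 d3 d4 : Rabs q = 3 ->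
  Dc k d1 -> Dc k d2 -> Dc k d3 -> Dc k d4 ->
  t0 = ell q (vadd d1 t1) -> t1 = ell q (vadd d2 t2) ->
  t2 = ell q (vadd d3 t3) -> t3 = ell q (vadd d4 t0) -> Tc q k t0.
Proof. intros Hq H1 H2 H3 H4 E1 E2 E3 E4.
  assert (HD : forall i, Dc k (match i with O => d1 | S m => cyc4 d1 d2 d3 d4 m end)).
  { intros [|n]; [exact H1|]. revert n. fix IH 1. intros [|[|[|[|n]]]]; simpl; auto. }
  assert (HB : forall n, Nv (cyc4 t0 t1 t2 t3 n) <= Nv t0 + Nv t1 + Nv t2 + Nv t3).
  { pose proof (Nv_ge0 t0); pose proof (Nv_ge0 t1); pose proof (Nv_ge0 t2); pose proof (Nv_ge0 t3).
    fix IH 1. intros [|[|[|[|n]]]]; simpl; try lra. apply IH. }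
  assert (HO : forall n, cyc4 t0 t1 t2 t3 n = ell q (vadd (cyc4 d1 d2 d3 d4 n) (cyc4 t0 t1 t2 t3 (S n)))).
  { fix IH 1. intros [|[|[|[|n]]]]; simpl; auto. }
  exact (orbit_Tc q k _ (cyc4 t0 t1 t2 t3) _ Hq HD HB HO).
Qed.

Ltac rabs3 := match goal with |- Rabs _ = 3 => first [rewrite Rabs_pos_eq by lra; lra | rewrite Rabs_left by lra; lra] end.
Ltac dig := match goal with |- Dc _ _ => unfold Dc; first [left; reflexivity | right; left; reflexivity | right; right; reflexivity] end.
Ltac veq := unfold ell, vadd; simpl; f_equal; field.

Lemma edges_p3_p1 : forall d, Dc (1) d -> exists s s', Tc (3) (1) s /\ Tc (3) (1) s' /\ vadd d s = s'.
Proof. intros d [Hd|[Hd|Hd]]; subst d.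
  - exists (0,0), (0,0). split; [apply Tc_zero; rabs3|]. split; [apply Tc_zero; rabs3|]. veq.
  - assert (A0 : Tc (3) (1) ((3/2), (1/2))).
    { apply (cycle4 (3) (1) ((3/2), (1/2)) ((3/2), (1/2)) ((3/2), (1/2)) ((3/2), (1/2)) (0,(1)) (0,(1)) (0,(1)) (0,(1))); try rabs3; try dig; veq. }
    assert (B0 : Tc (3) (1) ((1/2), (1/2))).
    { apply (cycle4 (3) (1) ((1/2), (1/2)) ((1/2), (1/2)) ((1/2), (1/2)) ((1/2), (1/2)) (1,0) (1,0) (1,0) (1,0)); try rabs3; try dig; veq. }
    exists ((1/2), (1/2)), ((3/2), (1/2)). split; [exact B0|]. split; [exact A0|]. veq.
  - assert (A0 : Tc (3) (1) ((0), (1))).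
    { apply (cycle4 (3) (1) ((0), (1)) ((2), (0)) ((0), (1)) ((2), (0)) (1,0) (0,(1)) (1,0) (0,(1))); try rabs3; try dig; veq. }
    assert (B0 : Tc (3) (1) ((0), (0))).
    { apply (cycle4 (3) (1) ((0), (0)) ((0), (0)) ((0), (0)) ((0), (0)) (0,0) (0,0) (0,0) (0,0)); try rabs3; try dig; veq. }
    exists ((0), (0)), ((0), (1)). split; [exact B0|]. split; [exact A0|]. veq.
Qed.

Lemma edges_p3_m1 : forall d, Dc (-1) d -> exists s s', Tc (3) (-1) s /\ Tc (3) (-1) s' /\ vadd d s = s'.
Proof. intros d [Hd|[Hd|Hd]]; subst d.
  - exists (0,0), (0,0). split; [apply Tc_zero; rabs3|]. split; [apply Tc_zero; rabs3|]. veq.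
  - assert (A0 : Tc (3) (-1) ((0), (0))).
    { apply (cycle4 (3) (-1) ((0), (0)) ((0), (0)) ((0), (0)) ((0), (0)) (0,0) (0,0) (0,0) (0,0)); try rabs3; try dig; veq. }
    assert (B0 : Tc (3) (-1) ((0), (0))).
    { apply (cycle4 (3) (-1) ((0), (0)) ((0), (0)) ((0), (0)) ((0), (0)) (0,0) (0,0) (0,0) (0,0)); try rabs3; try dig; veq. }
    assert (B1 : Tc (3) (-1) ((-1), (0))).
    { replace ((-1), (0)) with (ell (3) (vadd (0,(-1)) ((0), (0)))) by veq. apply Tc_image; [dig | exact B0]. }
    exists ((-1), (0)), ((0), (0)). split; [exact B1|]. split; [exact A0|]. veq.
  - assert (A0 : Tc (3) (-1) ((0), (-1/2))).
    { apply (cycle4 (3) (-1) ((0), (-1/2)) ((-3/2), (0)) ((0), (-1/2)) ((-3/2), (0)) (0,0) (0,(-1)) (0,0) (0,(-1))); try rabs3; try dig; veq. }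
    assert (B0 : Tc (3) (-1) ((1/2), (0))).
    { apply (cycle4 (3) (-1) ((1/2), (0)) ((0), (1/2)) ((1/2), (0)) ((0), (1/2)) (0,0) (1,0) (0,0) (1,0)); try rabs3; try dig; veq. }
    assert (B1 : Tc (3) (-1) ((0), (1/2))).
    { replace ((0), (1/2)) with (ell (3) (vadd (1,0) ((1/2), (0)))) by veq. apply Tc_image; [dig | exact B0]. }
    exists ((0), (1/2)), ((0), (-1/2)). split; [exact B1|]. split; [exact A0|]. veq.
Qed.

Lemma edges_m3_p1 : forall d, Dc (1) d -> exists s s', Tc (-3) (1) s /\ Tc (-3) (1) s' /\ vadd d s = s'.
Proof. intros d [Hd|[Hd|Hd]]; subst d.
  - exists (0,0), (0,0). split; [apply Tc_zero; rabs3|]. split; [apply Tc_zero; rabs3|]. veq.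
  - assert (A0 : Tc (-3) (1) ((3/4), (-1/4))).
    { apply (cycle4 (-3) (1) ((3/4), (-1/4)) ((3/4), (-1/4)) ((3/4), (-1/4)) ((3/4), (-1/4)) (0,(1)) (0,(1)) (0,(1)) (0,(1))); try rabs3; try dig; veq. }
    assert (B0 : Tc (-3) (1) ((-1/4), (-1/4))).
    { apply (cycle4 (-3) (1) ((-1/4), (-1/4)) ((-1/4), (-1/4)) ((-1/4), (-1/4)) ((-1/4), (-1/4)) (1,0) (1,0) (1,0) (1,0)); try rabs3; try dig; veq. }
    exists ((-1/4), (-1/4)), ((3/4), (-1/4)). split; [exact B0|]. split; [exact A0|]. veq.
  - assert (A0 : Tc (-3) (1) ((0), (1/4))).
    { apply (cycle4 (-3) (1) ((0), (1/4)) ((-3/4), (0)) ((0), (-3/4)) ((5/4), (0)) (0,0) (0,0) (1,0) (0,(1))); try rabs3; try dig; veq. }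
    assert (B0 : Tc (-3) (1) ((0), (1/4))).
    { apply (cycle4 (-3) (1) ((0), (1/4)) ((-3/4), (0)) ((0), (-3/4)) ((5/4), (0)) (0,0) (0,0) (1,0) (0,(1))); try rabs3; try dig; veq. }
    assert (B1 : Tc (-3) (1) ((5/4), (0))).
    { replace ((5/4), (0)) with (ell (-3) (vadd (0,(1)) ((0), (1/4)))) by veq. apply Tc_image; [dig | exact B0]. }
    assert (B2 : Tc (-3) (1) ((0), (-3/4))).
    { replace ((0), (-3/4)) with (ell (-3) (vadd (1,0) ((5/4), (0)))) by veq. apply Tc_image; [dig | exact B1]. }
    exists ((0), (-3/4)), ((0), (1/4)). split; [exact B2|]. split; [exact A0|]. veq.
Qed.

Lemma edges_m3_m1 : forall d, Dc (-1) d -> exists s s', Tc (-3) (-1) s /\ Tc (-3) (-1) s' /\ vadd d s = s'.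
Proof. intros d [Hd|[Hd|Hd]]; subst d.
  - exists (0,0), (0,0). split; [apply Tc_zero; rabs3|]. split; [apply Tc_zero; rabs3|]. veq.
  - assert (A0 : Tc (-3) (-1) ((0), (0))).
    { apply (cycle4 (-3) (-1) ((0), (0)) ((0), (0)) ((0), (0)) ((0), (0)) (0,0) (0,0) (0,0) (0,0)); try rabs3; try dig; veq. }
    assert (B0 : Tc (-3) (-1) ((0), (0))).
    { apply (cycle4 (-3) (-1) ((0), (0)) ((0), (0)) ((0), (0)) ((0), (0)) (0,0) (0,0) (0,0) (0,0)); try rabs3; try dig; veq. }
    assert (B1 : Tc (-3) (-1) ((-1), (0))).
    { replace ((-1), (0)) with (ell (-3) (vadd (0,(-1)) ((0), (0)))) by veq. apply Tc_image; [dig | exact B0]. }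
    exists ((-1), (0)), ((0), (0)). split; [exact B1|]. split; [exact A0|]. veq.
  - assert (A0 : Tc (-3) (-1) ((1/2), (0))).
    { apply (cycle4 (-3) (-1) ((1/2), (0)) ((0), (1/2)) ((-3/2), (0)) ((0), (-1/2)) (0,0) (0,0) (0,(-1)) (1,0)); try rabs3; try dig; veq. }
    assert (A1 : Tc (-3) (-1) ((0), (-1/2))).
    { replace ((0), (-1/2)) with (ell (-3) (vadd (1,0) ((1/2), (0)))) by veq. apply Tc_image; [dig | exact A0]. }
    assert (B0 : Tc (-3) (-1) ((1/2), (0))).
    { apply (cycle4 (-3) (-1) ((1/2), (0)) ((0), (1/2)) ((-3/2), (0)) ((0), (-1/2)) (0,0) (0,0) (0,(-1)) (1,0)); try rabs3; try dig; veq. }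
    assert (B1 : Tc (-3) (-1) ((0), (-1/2))).
    { replace ((0), (-1/2)) with (ell (-3) (vadd (1,0) ((1/2), (0)))) by veq. apply Tc_image; [dig | exact B0]. }
    assert (B2 : Tc (-3) (-1) ((-3/2), (0))).
    { replace ((-3/2), (0)) with (ell (-3) (vadd (0,(-1)) ((0), (-1/2)))) by veq. apply Tc_image; [dig | exact B1]. }
    assert (B3 : Tc (-3) (-1) ((0), (1/2))).
    { replace ((0), (1/2)) with (ell (-3) (vadd (0,0) ((-3/2), (0)))) by veq. apply Tc_image; [dig | exact B2]. }
    exists ((0), (1/2)), ((0), (-1/2)). split; [exact B3|]. split; [exact A1|]. veq.
Qed.


Definition Phi (v w : vec) (c : vec) : vec := vadd (vscale (fst c) v) (vscale (snd c) w).
Definition cr (v w : vec) := fst v * snd w - snd v * fst w.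
Definition Phiinv (v w : vec) (p : vec) : vec :=
  ((fst p * snd w - snd p * fst w) / cr v w, (fst v * snd p - snd v * fst p) / cr v w).

Lemma minv_Phi A v c : IZR (m11 A) + IZR (m22 A) = 0 -> IZR (mdet A) <> 0 ->
  minv_apply A (Phi v (mapply A v) c) = Phi v (mapply A v) (ell (- IZR (mdet A)) c).
Proof. intros Htr Hdet. unfold mdet in *. rewrite minus_IZR, !mult_IZR in *.
  destruct v as [v1 v2], c as [c1 c2]. unfold minv_apply, Phi, mapply, ell, vadd, vscale, mdet in *; simpl in *.
  rewrite minus_IZR, !mult_IZR.
  assert (E : IZR (m22 A) = - IZR (m11 A)) by lra. rewrite E in *.
  f_equal; field; auto.
Qed.

Lemma minv_pow_Phi A v c n : IZR (m11 A) + IZR (m22 A) = 0 -> IZR (mdet A) <> 0 ->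
  minv_pow A n (Phi v (mapply A v) c) = Phi v (mapply A v) (elln (- IZR (mdet A)) n c).
Proof. intros. induction n; simpl; auto. unfold minv_pow in *. simpl. rewrite IHn. apply minv_Phi; auto. Qed.

Lemma Phi_add v w a b : Phi v w (vadd a b) = vadd (Phi v w a) (Phi v w b).
Proof. destruct v, w, a, b; unfold Phi, vadd, vscale; simpl; f_equal; ring. Qed.

Lemma psum_Phi A v d c n : IZR (m11 A) + IZR (m22 A) = 0 -> IZR (mdet A) <> 0 ->
  (forall i, d i = Phi v (mapply A v) (c i)) ->
  psum A d n = Phi v (mapply A v) (cpsum (- IZR (mdet A)) c n).
Proof. intros H1 H2 Hd. induction n.
  - simpl. unfold Phi, vadd, vscale, vzero; simpl; f_equal; ring.
  - change (psum A d (S n)) with (vadd (psum A d n) (minv_pow A (S n) (d (S n)))).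
    change (cpsum (- IZR (mdet A)) c (S n)) with (vadd (cpsum (- IZR (mdet A)) c n) (elln (- IZR (mdet A)) (S n) (c (S n)))).
    rewrite IHn, Hd, minv_pow_Phi, Phi_add; auto.
Qed.

Lemma cr_nz v w : lin_indep2 v w -> cr v w <> 0.
Proof. intros Hl Hc. unfold cr in Hc. destruct v as [v1 v2], w as [w1 w2]; simpl in Hc.
  destruct (Hl w2 (- v2)) as [Ha Hb].
  { unfold vadd, vscale, vzero; simpl; f_equal; nra. }
  destruct (Hl w1 (- v1)) as [Hc' Hd].
  { unfold vadd, vscale, vzero; simpl; f_equal; nra. }
  assert (v1 = 0) by lra. assert (v2 = 0) by lra. subst.
  destruct (Hl 1 0) as [H _]. { unfold vadd, vscale, vzero; simpl; f_equal; ring. } lra.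
Qed.

Lemma Phi_inv v w p : cr v w <> 0 -> Phi v w (Phiinv v w p) = p.
Proof. intros H. destruct v, w, p; unfold Phi, Phiinv, cr, vadd, vscale in *; simpl in *; f_equal; field; auto. Qed.
Lemma inv_Phi v w c : cr v w <> 0 -> Phiinv v w (Phi v w c) = c.
Proof. intros H. destruct v, w, c; unfold Phi, Phiinv, cr, vadd, vscale in *; simpl in *; f_equal; field; auto. Qed.

Lemma transfer A v k x : IZR (m11 A) + IZR (m22 A) = 0 -> IZR (mdet A) <> 0 ->
  cr v (mapply A v) <> 0 ->
  (self_affine A (digits A v k) x <->
   exists t, Tc (- IZR (mdet A)) (IZR k) t /\ x = Phi v (mapply A v) t).
Proof. intros Htr Hdet Hcr. set (w := mapply A v). set (q := - IZR (mdet A)). split.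
  - intros [d [Hd [H1 H2]]].
    set (c := fun i => Phiinv v w (d i)).
    assert (Hdc : forall i, d i = Phi v w (c i)) by (intros; unfold c; rewrite Phi_inv; auto).
    assert (Hps : forall n, cpsum q c n = Phiinv v w (psum A d n)).
    { intros n. unfold q, w. rewrite (psum_Phi A v d c n); auto. rewrite inv_Phi; auto. }
    exists (Phiinv v w x). split; [|rewrite Phi_inv; auto].
    exists c. split.
    { intros i. unfold c. destruct (Hd i) as [E|[E|E]]; rewrite E; unfold Dc.
      - left. unfold Phiinv, vzero; simpl; f_equal; field; auto.
      - right; left. unfold Phiinv, cr in *; simpl; f_equal; field; auto.
      - right; right. unfold Phiinv, vscale, cr in *; fold w; simpl; f_equal; field; auto. }
    split.
    + apply cv_ext with (fun n => (snd w / cr v w) * fst (psum A d n) + (- fst w / cr v w) * snd (psum A d n)).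
      { intros n; rewrite Hps; unfold Phiinv; simpl; field; auto. }
      replace (fst (Phiinv v w x)) with ((snd w / cr v w) * fst x + (- fst w / cr v w) * snd x)
        by (unfold Phiinv; simpl; field; auto).
      apply cv_lin; auto.
    + apply cv_ext with (fun n => (- snd v / cr v w) * fst (psum A d n) + (fst v / cr v w) * snd (psum A d n)).
      { intros n; rewrite Hps; unfold Phiinv; simpl; field; auto. }
      replace (snd (Phiinv v w x)) with ((- snd v / cr v w) * fst x + (fst v / cr v w) * snd x)
        by (unfold Phiinv; simpl; field; auto).
      apply cv_lin; auto.
  - intros [t [[c [Hc [H1 H2]]] ->]].
    set (d := fun i => Phi v w (c i)).
    exists d. split.
    { intros i. unfold d, digits. destruct (Hc i) as [E|[E|E]]; rewrite E; unfold Phi, vadd, vscale, vzero.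
      - left. simpl. f_equal; ring.
      - right; left. destruct v; simpl; f_equal; ring.
      - right; right. fold w. destruct v, w; simpl; f_equal; ring. }
    assert (Hps : forall n, psum A d n = Phi v w (cpsum q c n)) by (intros; apply psum_Phi; auto).
    split.
    + apply cv_ext with (fun n => fst v * fst (cpsum q c n) + fst w * snd (cpsum q c n)).
      { intros n; rewrite Hps; unfold Phi, vadd, vscale; simpl; ring. }
      replace (fst (Phi v w t)) with (fst v * fst t + fst w * snd t) by (unfold Phi, vadd, vscale; simpl; ring).
      apply cv_lin; auto.
    + apply cv_ext with (fun n => snd v * fst (cpsum q c n) + snd w * snd (cpsum q c n)).
      { intros n; rewrite Hps; unfold Phi, vadd, vscale; simpl; ring. }
      replace (snd (Phi v w t)) with (snd v * fst t + snd w * snd t) by (unfold Phi, vadd, vscale; simpl; ring).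
      apply cv_lin; auto.
Qed.

Lemma connected2_ext (S1 S2 : vec -> Prop) : (forall x, S1 x <-> S2 x) -> connected2 S1 -> connected2 S2.
Proof. intros H Hc [U [V [HU [HV [Hcov [[x [Sx Ux]] [[y [Sy Vy]] Hd]]]]]]]. apply Hc.
  exists U, V. repeat split; auto.
  - intros z Sz; apply Hcov, H; auto.
  - exists x; split; auto; apply H; auto.
  - exists y; split; auto; apply H; auto.
  - intros z Sz; apply Hd, H; auto.
Qed.

Lemma dist2_le p p' : dist2 p p' <= Rabs (fst p - fst p') + Rabs (snd p - snd p').
Proof. unfold dist2. set (a := fst p - fst p'). set (b := snd p - snd p').
  rewrite <- (sqrt_pow2 (Rabs a + Rabs b)) by (pose proof (Rabs_pos a); pose proof (Rabs_pos b); lra).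
  apply sqrt_le_1_alt.
  rewrite <- (pow2_abs a), <- (pow2_abs b). pose proof (Rabs_pos a); pose proof (Rabs_pos b). nra.
Qed.

Lemma dist2_ge1 p p' : Rabs (fst p - fst p') <= dist2 p p'.
Proof. unfold dist2. rewrite <- (sqrt_pow2 (Rabs (fst p - fst p'))) by apply Rabs_pos. apply sqrt_le_1_alt.
  rewrite pow2_abs. pose proof (pow2_ge_0 (snd p - snd p')). lra. Qed.
Lemma dist2_ge2 p p' : Rabs (snd p - snd p') <= dist2 p p'.
Proof. unfold dist2. rewrite <- (sqrt_pow2 (Rabs (snd p - snd p'))) by apply Rabs_pos. apply sqrt_le_1_alt.
  rewrite pow2_abs. pose proof (pow2_ge_0 (fst p - fst p')). lra. Qed.

Lemma Phi_lip v w a b : dist2 (Phi v w a) (Phi v w b) <= (Nv v + Nv w) * Nv (vadd a (vscale (-1) b)).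
Proof. eapply Rle_trans; [apply dist2_le|].
  destruct v as [v1 v2], w as [w1 w2], a as [a1 a2], b as [b1 b2]; unfold Phi, Nv, vadd, vscale; simpl.
  replace (a1 * v1 + a2 * w1 - (b1 * v1 + b2 * w1)) with ((a1 + -1 * b1) * v1 + (a2 + -1 * b2) * w1) by ring.
  replace (a1 * v2 + a2 * w2 - (b1 * v2 + b2 * w2)) with ((a1 + -1 * b1) * v2 + (a2 + -1 * b2) * w2) by ring.
  set (x := a1 + -1 * b1). set (y := a2 + -1 * b2).
  pose proof (Rabs_triang (x * v1) (y * w1)). pose proof (Rabs_triang (x * v2) (y * w2)).
  rewrite !Rabs_mult in *.
  pose proof (Rabs_pos x); pose proof (Rabs_pos y); pose proof (Rabs_pos v1); pose proof (Rabs_pos v2);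
  pose proof (Rabs_pos w1); pose proof (Rabs_pos w2). nra.
Qed.

Lemma f_lip v w p p' : cr v w <> 0 ->
  Rabs (fst (Phiinv v w p) - fst (Phiinv v w p')) <= ((Rabs (fst w) + Rabs (snd w)) / Rabs (cr v w)) * dist2 p p'.
Proof. intros H. unfold Phiinv; simpl.
  replace ((fst p * snd w - snd p * fst w) / cr v w - (fst p' * snd w - snd p' * fst w) / cr v w)
    with (((fst p - fst p') * snd w + (snd p - snd p') * (- fst w)) / cr v w) by (field; auto).
  unfold Rdiv. rewrite Rabs_mult, Rabs_inv.
  pose proof (Rabs_pos (cr v w)). assert (Rabs (cr v w) > 0) by (apply Rabs_pos_lt; auto).
  replace ((Rabs (fst w) + Rabs (snd w)) * / Rabs (cr v w) * dist2 p p') with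
    (((Rabs (fst w) + Rabs (snd w)) * dist2 p p') * / Rabs (cr v w)) by ring.
  apply Rmult_le_compat_r. { left; apply Rinv_0_lt_compat; lra. }
  eapply Rle_trans; [apply Rabs_triang|]. rewrite !Rabs_mult, Rabs_Ropp.
  pose proof (dist2_ge1 p p'); pose proof (dist2_ge2 p p').
  pose proof (Rabs_pos (fst w)); pose proof (Rabs_pos (snd w)). nra.
Qed.

Theorem mainTheorem2 (A : mat2) (k : Z) (v : vec) :
  expanding A ->
  ((forall x : R, charpoly A x = x ^ 2 + 3) \/ (forall x : R, charpoly A x = x ^ 2 - 3)) ->
  k <> 0%Z ->
  lin_indep2 v (mapply A v) ->
  (connected2 (self_affine A (digits A v k)) <-> (k = 1%Z \/ k = (-1)%Z)).
Proof.
  intros _ Hchar Hk Hli.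
  assert (Htr : IZR (m11 A) + IZR (m22 A) = 0 /\ (IZR (mdet A) = 3 \/ IZR (mdet A) = -3)).
  { destruct Hchar as [H|H]; pose proof (H 0) as H0; pose proof (H 1) as H1;
      unfold charpoly, mtr in *; rewrite plus_IZR in *; simpl in *; split; try lra. }
  destruct Htr as [Htr Hdet].
  assert (Hdet0 : IZR (mdet A) <> 0) by lra.
  set (w := mapply A v).
  assert (Hcr : cr v w <> 0) by (apply cr_nz; auto).
  pose proof (fun x => transfer A v k x Htr Hdet0 Hcr) as Heq. fold w in Heq.
  assert (HC : 0 <= Nv v + Nv w) by (pose proof (Nv_ge0 v); pose proof (Nv_ge0 w); lra).
  assert (HCf : 0 <= (Rabs (fst w) + Rabs (snd w)) / Rabs (cr v w)).
  { apply Rmult_le_pos. { pose proof (Rabs_pos (fst w)); pose proof (Rabs_pos (snd w)); lra. }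
    left; apply Rinv_0_lt_compat, Rabs_pos_lt; auto. }
  assert (Hf : forall t, fst (Phiinv v w (Phi v w t)) = fst t) by (intros; rewrite inv_Phi; auto).
  assert (Hlip : forall p p', Rabs (fst (Phiinv v w p) - fst (Phiinv v w p')) <=
     ((Rabs (fst w) + Rabs (snd w)) / Rabs (cr v w)) * dist2 p p') by (intros; apply f_lip; auto).
  destruct Hdet as [Hd|Hd]; rewrite Hd in Heq;
    [replace (Ropp 3) with (-3) in Heq by ring | replace (Ropp (-3)) with 3 in Heq by ring].
  -
    split.
    + intros Hc. destruct (Z.eq_dec k 1) as [|H1]; [left; auto|].
      destruct (Z.eq_dec k (-1)) as [|H2]; [right; auto|]. exfalso.
      apply (connected2_ext _ (fun x => exists t, Tc (-3) (IZR k) t /\ x = Phi v w t)) in Hc; [|apply Heq].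
      revert Hc.
      assert (Hk2 : (k >= 2 \/ k <= -2)%Z) by lia.
      destruct Hk2 as [Hk2|Hk2].
      * apply IZR_ge in Hk2. set (K := IZR k) in *.
        apply (disc_main (-3) K (Phi v w) (fun p => fst (Phiinv v w p)) _ ltac:(rabs3) HCf Hf Hlip
                 (- 3 * (1 + K) / 8) ((1 + K) / 8)).
        { apply (ybounds (-3) K (- 3 * (1 + K) / 8) (K + (1 + K) / 8)); [rabs3|].
          intros e1 e2 d s1 s2 He1 He2 Hd' Hs1 Hs2. destruct Hd' as [E|[E|E]]; subst d; simpl; split; lra. }
        rewrite Rabs_right by lra. lra.
      * apply IZR_le in Hk2. set (K := IZR k) in *.
        apply (disc_main (-3) K (Phi v w) (fun p => fst (Phiinv v w p)) _ ltac:(rabs3) HCf Hf Hlip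
                 ((K - 3) / 8) ((1 - 3 * K) / 8)).
        { apply (ybounds (-3) K ((9 * K - 3) / 8) ((1 - 3 * K) / 8)); [rabs3|].
          intros e1 e2 d s1 s2 He1 He2 Hd' Hs1 Hs2. destruct Hd' as [E|[E|E]]; subst d; simpl; split; lra. }
        rewrite Rabs_left by lra. lra.
    + intros [Hk1|Hk1]; subst k.
      * apply (connected2_ext (fun x => exists t, Tc (-3) 1 t /\ x = Phi v w t)).
        { intros; symmetry; apply Heq. }
        apply (conn_main (-3) 1 (Phi v w) (Nv v + Nv w)); [rabs3 | exact HC | apply Phi_lip | exact edges_m3_p1].
      * apply (connected2_ext (fun x => exists t, Tc (-3) (-1) t /\ x = Phi v w t)).
        { intros; symmetry; apply Heq. }
        apply (conn_main (-3) (-1) (Phi v w) (Nv v + Nv w)); [rabs3 | exact HC | apply Phi_lip | exact edges_m3_m1].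
  -
    split.
    + intros Hc. destruct (Z.eq_dec k 1) as [|H1]; [left; auto|].
      destruct (Z.eq_dec k (-1)) as [|H2]; [right; auto|]. exfalso.
      apply (connected2_ext _ (fun x => exists t, Tc 3 (IZR k) t /\ x = Phi v w t)) in Hc; [|apply Heq].
      revert Hc.
      assert (Hk2 : (k >= 2 \/ k <= -2)%Z) by lia.
      destruct Hk2 as [Hk2|Hk2].
      * apply IZR_ge in Hk2. set (K := IZR k) in *.
        apply (disc_main 3 K (Phi v w) (fun p => fst (Phiinv v w p)) _ ltac:(rabs3) HCf Hf Hlip
                 0 ((1 + K) / 2)).
        { apply (ybounds 3 K 0 (K + (1 + K) / 2)); [rabs3|].
          intros e1 e2 d s1 s2 He1 He2 Hd' Hs1 Hs2. destruct Hd' as [E|[E|E]]; subst d; simpl; split; lra. }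
        rewrite Rabs_right by lra. lra.
      * apply IZR_le in Hk2. set (K := IZR k) in *.
        apply (disc_main 3 K (Phi v w) (fun p => fst (Phiinv v w p)) _ ltac:(rabs3) HCf Hf Hlip
                 (K / 2) (1 / 2)).
        { apply (ybounds 3 K (3 * K / 2) (1 / 2)); [rabs3|].
          intros e1 e2 d s1 s2 He1 He2 Hd' Hs1 Hs2. destruct Hd' as [E|[E|E]]; subst d; simpl; split; lra. }
        rewrite Rabs_left by lra. lra.
    + intros [Hk1|Hk1]; subst k.
      * apply (connected2_ext (fun x => exists t, Tc 3 1 t /\ x = Phi v w t)).
        { intros; symmetry; apply Heq. }
        apply (conn_main 3 1 (Phi v w) (Nv v + Nv w)); [rabs3 | exact HC | apply Phi_lip | exact edges_p3_p1].
      * apply (connected2_ext (fun x => exists t, Tc 3 (-1) t /\ x = Phi v w t)).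
        { intros; symmetry; apply Heq. }
        apply (conn_main 3 (-1) (Phi v w) (Nv v + Nv w)); [rabs3 | exact HC | apply Phi_lip | exact edges_p3_m1].
Qed.
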